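(* Let $r\ge5$ and let $T$ be a $K_r$-tree composed of copies $H_1,\dots,H_\vartheta$ of $K_r$. Then: (1) every clique in $T$ is contained in some $H_i$; (2) if two distinct vertices $x\ne y$ of $T$ have at least three common neighbors in $T$, then $x$ and $y$ are adjacent in $T$.
   Context: A graph $T$ is a $K_r$-tree (clique tree) of order $\vartheta$ if it is the union of $\vartheta$ copies $H_1,\dots,H_\vartheta$ of $K_r$ such that, for every $1<i\le\vartheta$, $H_i$ shares exactly one edge with $H_1\cup\cdots\cup H_{i-1}$, i.e. the common vertices of $H_i$ and $H_1\cup\cdots\cup H_{i-1}$ are exactly the two endpoints of a single edge of $H_1\cup\cdots\cup H_{i-1}$. *)

(* Defs.v *)
From mathcomp Require Import all_boot.
Set Implicit Arguments. Unset Strict Implicit. Unset Printing Implicit Defensive.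

(* A K_r-tree is given by the sequence Hs = [:: H_1; ...; H_theta] of vertex
   sets of the copies of K_r, inside an ambient finite type V.  The graph T
   is the union of these cliques. *)
Section KrTree.
Variable V : finType.

Definition uverts (Hs : seq {set V}) : {set V} := \bigcup_(H <- Hs) H.

Definition uadj (Hs : seq {set V}) (x y : V) : bool :=
  (x != y) && has (fun H : {set V} => (x \in H) && (y \in H)) Hs.

(* Hs is a K_r-tree of order size Hs >= 1: each H_i is a copy of K_r
   (r vertices), and for every 1 < i <= theta, H_i meets H_1 u ... u H_(i-1)
   in exactly the two endpoints of an edge of H_1 u ... u H_(i-1). *)
Definition is_Kr_tree (r : nat) (Hs : seq {set V}) : Prop :=
  [/\ 0 < size Hs,
      all (fun H : {set V} => #|H| == r) Hs
    & forall i, 0 < i < size Hs ->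
        exists a b : V,
          [/\ uadj (take i Hs) a b &
              nth set0 Hs i :&: uverts (take i Hs) = [set a; b]]].

Definition uclique (Hs : seq {set V}) (C : {set V}) : Prop :=
  C \subset uverts Hs /\ {in C &, forall x y, x != y -> uadj Hs x y}.

End KrTree.

(* Main.v *)
Require Import Defs.
From mathcomp Require Import all_boot.

Section Aux.
Variable V : finType.

Lemma in_uverts (Hs : seq {set V}) x :
  (x \in uverts Hs) = has (fun G : {set V} => x \in G) Hs.
Proof.
rewrite /uverts; elim: Hs => [|G Hs IH]; first by rewrite big_nil inE.
by rewrite big_cons inE IH.
Qed.

Lemma uadjC (Hs : seq {set V}) x y : uadj Hs x y = uadj Hs y x.
Proof. rewrite /uadj eq_sym; congr (_ && _); apply: eq_has => G; exact: andbC. Qed.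

Lemma uadj_in (Hs : seq {set V}) x y :
  uadj Hs x y -> (x \in uverts Hs) && (y \in uverts Hs).
Proof.
rewrite /uadj !in_uverts => /andP[_ /hasP[G GH /andP[xG yG]]].
by apply/andP; split; apply/hasP; exists G.
Qed.

Lemma uadj_rcons (Hs : seq {set V}) (H : {set V}) x y :
  uadj (rcons Hs H) x y = uadj Hs x y || [&& x != y, x \in H & y \in H].
Proof. rewrite /uadj has_rcons. by case: (x != y) => //=; rewrite orbC. Qed.

Lemma uverts_rcons (Hs : seq {set V}) (H : {set V}) x :
  (x \in uverts (rcons Hs H)) = (x \in H) || (x \in uverts Hs).
Proof. by rewrite !in_uverts has_rcons. Qed.

Definition PP (Hs : seq {set V}) :=
  (forall C, uclique Hs C -> forall c, c \in C -> exists2 G, G \in Hs & C \subset G) /\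
  (forall x y, x \in uverts Hs -> y \in uverts Hs -> x != y ->
     2 < #|[set z | uadj Hs x z && uadj Hs y z]| -> uadj Hs x y).

Lemma stepP (Hs : seq {set V}) (H : {set V}) : PP Hs ->
  (forall u v, u \in H -> v \in H -> u \in uverts Hs -> v \in uverts Hs -> u != v -> uadj Hs u v) ->
  #|H :&: uverts Hs| <= 2 -> PP (rcons Hs H).
Proof.
move=> [IH1 IH2] Hcl Hcard.
set U := uverts Hs in Hcl Hcard IH2 *.
have A : forall x y, x \notin U -> uadj (rcons Hs H) x y -> (x \in H) && (y \in H).
  move=> x y xU; rewrite uadj_rcons => /orP[/uadj_in/andP[xU' _]|/and3P[_ -> ->]] //.
  by rewrite xU' in xU.
have B : forall x y, x \in U -> y \in U -> uadj (rcons Hs H) x y -> uadj Hs x y.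
  move=> x y xU yU; rewrite uadj_rcons => /orP[//|/and3P[nxy xH yH]].
  exact: Hcl.
have Bup : forall x y, uadj Hs x y -> uadj (rcons Hs H) x y.
  by move=> x y h; rewrite uadj_rcons h.
split.
- move=> C [CU Ccl] c cC.
  case: (boolP (C \subset H)) => [CH|].
    by exists H => //; rewrite mem_rcons mem_head.
  case/subsetPn => d dC dH.
  have dU : d \in U.
    by move/subsetP: CU => /(_ d dC); rewrite uverts_rcons (negbTE dH).
  have CsU : C \subset U.
    apply/subsetP => v vC; case: (boolP (v \in U)) => // vU.
    have vd : v != d by apply: contraNneq vU => ->.
    by have /andP[_ dH'] := A v d vU (Ccl v d vC dC vd); rewrite dH' in dH.
  have [G GHs CG] : exists2 G, G \in Hs & C \subset G.
    apply: (IH1 C _ c cC); split => // u v uC vC uv.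
    apply: B; [exact: (subsetP CsU) | exact: (subsetP CsU) | exact: Ccl].
  by exists G => //; rewrite mem_rcons in_cons GHs orbT.
- have side : forall x y, x \notin U -> x \in H -> x != y ->
      2 < #|[set z | uadj (rcons Hs H) x z && uadj (rcons Hs H) y z]| ->
      uadj (rcons Hs H) x y.
    move=> x y xU xH xy Hc.
    case: (boolP (y \in H)) => yH; first by rewrite uadj_rcons xy xH yH orbT.
    exfalso; move: Hc; apply/negP; rewrite -leqNgt.
    apply: leq_trans Hcard; apply: subset_leq_card; apply/subsetP => z.
    rewrite inE => /andP[xz yz]; rewrite inE.
    have /andP[_ zH] := A x z xU xz.
    rewrite zH /=; case: (boolP (z \in U)) => // zU.
    rewrite uadjC in yz; have /andP[_ yH'] := A z y zU yz.
    by rewrite yH' in yH.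
  move=> x y; rewrite !uverts_rcons => xin yin xy Hc.
  case: (boolP (x \in U)) => xU; last first.
    by apply: side => //; move: xin; rewrite (negbTE xU) orbF.
  case: (boolP (y \in U)) => yU; last first.
    rewrite uadjC; apply: side => //.
    - by move: yin; rewrite (negbTE yU) orbF.
    - by rewrite eq_sym.
    have -> : [set z | uadj (rcons Hs H) y z && uadj (rcons Hs H) x z]
            = [set z | uadj (rcons Hs H) x z && uadj (rcons Hs H) y z].
      by apply/setP => z; rewrite !inE andbC.
    exact: Hc.
  case: (boolP [exists z, (z \notin U) && (uadj (rcons Hs H) x z && uadj (rcons Hs H) y z)]).
    case/existsP => z /andP[zU /andP[xz yz]].
    rewrite uadjC in xz; rewrite uadjC in yz.
    have /andP[_ xH] := A z x zU xz; have /andP[_ yH] := A z y zU yz.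
    by apply: Bup; apply: Hcl.
  rewrite negb_exists => /forallP allU.
  apply: Bup; apply: IH2 => //.
  apply: leq_trans Hc _; apply: subset_leq_card; apply/subsetP => z.
  rewrite !inE => /andP[xz yz].
  have := allU z; rewrite xz yz /= andbT negbK => zU.
  by rewrite !B.
Qed.

Lemma P_take r (Hs : seq {set V}) : is_Kr_tree r Hs -> forall n, n <= size Hs -> PP (take n Hs).
Proof.
case=> _ _ Htree; elim=> [|n IHn] hn.
  rewrite take0; split.
    by move=> C [CU _] c cC; move: (subsetP CU c cC); rewrite in_uverts.
  by move=> x y; rewrite in_uverts.
rewrite (take_nth set0 hn); have IH := IHn (ltnW hn); clear IHn.
case: n hn IH => [|n] hn IH.
  apply: stepP => //.
    by move=> u v _ _; rewrite take0 in_uverts.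
  have -> : uverts (take 0 Hs) = set0 by rewrite take0 /uverts big_nil.
  by rewrite setI0 cards0.
have [a [b [uab Heq]]] := Htree n.+1 hn.
apply: stepP => //; last by rewrite Heq cards2; case: (a != b).
move=> u v uH vH uU vU uv.
have : u \in [set a; b] by rewrite -Heq inE uH uU.
have : v \in [set a; b] by rewrite -Heq inE vH vU.
rewrite !inE => /orP[/eqP ev|/eqP ev] /orP[/eqP eu|/eqP eu]; subst u v => //;
  try by rewrite eqxx in uv.
by rewrite uadjC.
Qed.

End Aux.

Theorem claim4p12 (V : finType) (r : nat) (Hs : seq {set V}) :
  4 < r -> is_Kr_tree r Hs ->
  (forall C : {set V}, uclique Hs C -> exists2 H, H \in Hs & C \subset H) /\
  (forall x y : V, x \in uverts Hs -> y \in uverts Hs -> x != y ->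
     2 < #|[set z | uadj Hs x z && uadj Hs y z]| -> uadj Hs x y).
Proof.
move=> _ Htr.
have := @P_take V r Hs Htr _ (leqnn (size Hs)); rewrite take_size => -[P1 P2].
split => // C hC.
case: (set_0Vmem C) => [->|[c cC]]; last exact: P1 hC c cC.
case: Htr => hs _ _.
by exists (nth set0 Hs 0); [exact: mem_nth | exact: sub0set].
Qed.
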